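(* Let $k=2^{\ell}$ with $\ell\ge2$ an integer and $q=4k$. Let $f\in\mathbb F_q[X,Y]$ be a local permutation polynomial whose permutation polynomial tuple consists of the $q$ elements of the group $G_1=\{b^ja^i:0\le j\le 2k-1,\ 0\le i\le 1\}$ (in some order), where $a$ and $b$ are as defined below. Then $f$ has a companion.
   Context: The elements of $\mathbb F_q$ are enumerated as $\mathbb F_q=\{c_0,\dots,c_{q-1}\}$; $\mathfrak S_q$ is the symmetric group of permutations of $\mathbb F_q$, composed right to left, $(\sigma\tau)(x)=\sigma(\tau(x))$, written in cycle notation. $a=(c_0,c_1)(c_2,c_3)\cdots(c_{4k-2},c_{4k-1})$ and $b=C_1C_2$, where $C_1$ is the $2k$-cycle whose entries in order are: for $m=0,1,\dots,\frac{k-2}{2}$ the pair $c_{2m},c_{2(2m+k-1)}$; then for $n=0,1,\dots,\frac{k-4}{2}$ the pair $c_{2n+k},c_{2(2n+k)}$; then $c_{4k-1},c_{4k-4}$; and $C_2$ is the $2k$-cycle whose entries in order are: for $m=0,1,\dots,\frac{k-2}{2}$ the pair $c_{2m+1},c_{2(2m+k)+1}$; then for $n=0,1,\dots,\frac{k-4}{2}$ the pair $c_{2n+k+1},c_{2(2n+k)-1}$; then $c_{4k-2},c_{4k-5}$. ($G_1$ is a subgroup of $\mathfrak S_q$ of order $q$ whose non-identity elements have no fixed points.) Every function $\mathbb F_q^2\to\mathbb F_q$ is identified with the unique polynomial in $\mathbb F_q[X,Y]$ of degree $<q$ in each variable representing it. $f$ is a local permutation polynomial (LPP) if $x\mapsto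 f(x,y_0)$ and $y\mapsto f(x_0,y)$ are permutations of $\mathbb F_q$ for all $x_0,y_0$. A permutation polynomial tuple is $(\beta_0,\dots,\beta_{q-1})\in\mathfrak S_q^q$ such that $\beta_i^{-1}\beta_j$ has no fixed point whenever $i\ne j$; LPPs $f$ correspond bijectively to such tuples via $f(x,\beta_i(x))=c_i$ for all $x$ and all $i$. Two LPPs $f,g$ are orthogonal (companions) if for every $(u,v)\in\mathbb F_q^2$ the system $f(X,Y)=u$, $g(X,Y)=v$ has exactly one solution in $\mathbb F_q^2$; a companion of $f$ is an LPP orthogonal to $f$. *)

(* Defs.v *)
From mathcomp Require Import all_boot all_order all_algebra all_field.
Set Implicit Arguments. Unset Strict Implicit. Unset Printing Implicit Defensive.

(* Index-level description (indices i stand for c_i, 0 <= i < 4k). *)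

Definition a_idx (i : nat) : nat := if odd i then i.-1 else i.+1.

Definition C1_idx (k : nat) : seq nat :=
  flatten [seq [:: 2 * m; 2 * (2 * m + k - 1)] | m <- iota 0 (k %/ 2)]
  ++ flatten [seq [:: 2 * n + k; 2 * (2 * n + k)] | n <- iota 0 (k %/ 2 - 1)]
  ++ [:: 4 * k - 1; 4 * k - 4].

Definition C2_idx (k : nat) : seq nat :=
  flatten [seq [:: 2 * m + 1; 2 * (2 * m + k) + 1] | m <- iota 0 (k %/ 2)]
  ++ flatten [seq [:: 2 * n + k + 1; 2 * (2 * n + k) - 1] | n <- iota 0 (k %/ 2 - 1)]
  ++ [:: 4 * k - 2; 4 * k - 5].

(* a cycle given by its list of entries: x |-> successor of x in the cycle
   (x itself if x does not occur); this is path.next *)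
Definition b_idx (k : nat) (i : nat) : nat := next (C1_idx k) (next (C2_idx k) i).

(* Transport to the field via the enumeration cs = [:: c_0; ...; c_{q-1}]. *)
Definition a_perm (F : finFieldType) (cs : seq F) : {ffun F -> F} :=
  [ffun x => nth x cs (a_idx (index x cs))].

Definition b_perm (F : finFieldType) (k : nat) (cs : seq F) : {ffun F -> F} :=
  [ffun x => nth x cs (b_idx k (index x cs))].

(* G_1 = { b^j a^i : 0 <= j <= 2k-1, 0 <= i <= 1 }, composition right to left *)
Definition G1 (F : finFieldType) (k : nat) (cs : seq F) : {set {ffun F -> F}} :=
  [set [ffun x => iter (nat_of_ord ji.1) (b_perm k cs) (iter (nat_of_ord ji.2) (a_perm cs) x)]
    | ji : 'I_(2 * k) * 'I_2].

(* local permutation polynomial (functions F^2 -> F identified with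
   reduced polynomials) *)
Definition LPP (F : finFieldType) (f : F -> F -> F) : Prop :=
  (forall y, bijective (fun x => f x y)) /\ (forall x, bijective (f x)).

Definition orthogonal_LPP (F : finFieldType) (f g : F -> F -> F) : Prop :=
  forall u v : F, exists! p : F * F, f p.1 p.2 = u /\ g p.1 p.2 = v.

(* Main.v *)
Require Import Defs.
From mathcomp Require Import all_boot all_order all_algebra all_field.
From mathcomp Require Import zify ring.
Set Implicit Arguments. Unset Strict Implicit. Unset Printing Implicit Defensive.
Import GRing.Theory.

Lemma nth_flat2 (f g : nat -> nat) d n a p : p < 2 * n ->
  nth d (flatten [seq [:: f m; g m] | m <- iota a n]) p =
  if odd p then g (a + p %/ 2) else f (a + p %/ 2).
Proof.
elim: n a p => [|n IH] a p; first by rewrite muln0.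
move=> hp; rewrite /= .
case: p hp => [|[|p]] hp /=; rewrite ?addn0 //.
rewrite IH; last by lia.
have -> : p.+2 %/ 2 = (p %/ 2).+1 by lia.
by rewrite negbK addSn addnS.
Qed.

Lemma size_flat2 (f g : nat -> nat) n a :
  size (flatten [seq [:: f m; g m] | m <- iota a n]) = 2 * n.
Proof. elim: n a => [|n IH] a //=; rewrite IH; lia. Qed.

Definition e1 k p := if p < k then (if odd p then 2*(2*(p%/2)+k-1) else 2*(p%/2))
  else if p < 2*k-2 then (if odd (p-k) then 2*(2*((p-k)%/2)+k) else 2*((p-k)%/2)+k)
  else if p == 2*k-2 then 4*k-1 else 4*k-4.
Definition e2 k p := if p < k then (if odd p then 2*(2*(p%/2)+k)+1 else 2*(p%/2)+1)
  else if p < 2*k-2 then (if odd (p-k) then 2*(2*((p-k)%/2)+k)-1 else 2*((p-k)%/2)+k+1)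
  else if p == 2*k-2 then 4*k-2 else 4*k-5.
Definition twn k p := if odd p then (if p < k then p + k else p - k) else p.

Ltac kill_if := repeat match goal with |- context [if ?b then _ else _] =>
   lazymatch b with context [if _ then _ else _] => fail | _ =>
   let H := fresh "H" in case: (boolP b) => H;
   try (match type of H with
        | is_true (odd ?X) => have := modn2 X; rewrite H /= => ?
        | is_true (~~ odd ?X) => have := modn2 X; rewrite (negbTE H) /= => ? end) end end.
Ltac crunch := kill_if; lia.

Lemma size_C1 k : k %% 2 = 0 -> 4 <= k -> size (C1_idx k) = 2 * k.
Proof. move=> hk h4; rewrite /C1_idx !size_cat !size_flat2 /=; lia. Qed.
Lemma size_C2 k : k %% 2 = 0 -> 4 <= k -> size (C2_idx k) = 2 * k.
Proof. move=> hk h4; rewrite /C2_idx !size_cat !size_flat2 /=; lia. Qed.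

Lemma nth_C1 k p : k %% 2 = 0 -> 4 <= k -> p < 2 * k -> nth 0 (C1_idx k) p = e1 k p.
Proof.
move=> hk h4 hp; rewrite /C1_idx /e1 nth_cat size_flat2.
have -> : 2 * (k %/ 2) = k by lia.
case: ltnP => h1.
  by rewrite nth_flat2 ?add0n; [| lia].
rewrite nth_cat size_flat2.
case: ltnP => h2.
  rewrite nth_flat2 ?add0n; last by lia.
  have -> : p < 2 * k - 2 by lia. done.
have -> : (p < 2 * k - 2) = false by lia.
have : p - k - 2 * (k %/ 2 - 1) < 2 by lia.
case E: (p - k - 2 * (k %/ 2 - 1)) => [|[|]] // _ /=.
  have -> : p == 2 * k - 2 by lia. done.
have -> : (p == 2 * k - 2) = false by lia. done.
Qed.

Lemma nth_C2 k p : k %% 2 = 0 -> 4 <= k -> p < 2 * k -> nth 0 (C2_idx k) p = e2 k p.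
Proof.
move=> hk h4 hp; rewrite /C2_idx /e2 nth_cat size_flat2.
have -> : 2 * (k %/ 2) = k by lia.
case: ltnP => h1.
  by rewrite nth_flat2 ?add0n; [| lia].
rewrite nth_cat size_flat2.
case: ltnP => h2.
  rewrite nth_flat2 ?add0n; last by lia.
  have -> : p < 2 * k - 2 by lia. done.
have -> : (p < 2 * k - 2) = false by lia.
have : p - k - 2 * (k %/ 2 - 1) < 2 by lia.
case E: (p - k - 2 * (k %/ 2 - 1)) => [|[|]] // _ /=.
  have -> : p == 2 * k - 2 by lia. done.
have -> : (p == 2 * k - 2) = false by lia. done.
Qed.

Lemma a_e1 k p : k %% 2 = 0 -> 4 <= k -> p < 2 * k -> a_idx (e1 k p) = e2 k (twn k p).
Proof. move=> hk h4 hp; rewrite /a_idx /e1 /e2 /twn; crunch. Qed.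
Lemma a_e2 k p : k %% 2 = 0 -> 4 <= k -> p < 2 * k -> a_idx (e2 k p) = e1 k (twn k p).
Proof. move=> hk h4 hp; rewrite /a_idx /e1 /e2 /twn; crunch. Qed.

Lemma e1_inj k p p' : k %% 2 = 0 -> 4 <= k -> p < 2*k -> p' < 2*k -> e1 k p = e1 k p' -> p = p'.
Proof. move=> hk h4 hp hq;  rewrite /e1; crunch. Qed.
Lemma e2_inj k p p' : k %% 2 = 0 -> 4 <= k -> p < 2*k -> p' < 2*k -> e2 k p = e2 k p' -> p = p'.
Proof. move=> hk h4 hp hq;  rewrite /e2; crunch. Qed.
Lemma e12 k p p' : k %% 2 = 0 -> 4 <= k -> p < 2*k -> p' < 2*k -> e1 k p <> e2 k p'.
Proof. move=> hk h4 hp hq; rewrite /e1 /e2; crunch. Qed.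

Lemma next_nth_uniq (T : eqType) (s : seq T) d i : uniq s -> i < size s ->
  next s (nth d s i) = nth d s (i.+1 %% size s).
Proof.
case: s => [|y s'] // hu hi.
rewrite next_nth mem_nth // index_uniq //.
case: (ltnP i.+1 (size s').+1) => h.
  by rewrite /= modn_small //= (set_nth_default d).
have -> : i = size s' by move: hi => /=; lia.
by rewrite /= modnn /= nth_default.
Qed.

Section Idx.
Variable k : nat.
Hypothesis hk : k %% 2 = 0.
Hypothesis h4 : 4 <= k.

Lemma uniq_C1 : uniq (C1_idx k).
Proof.
apply/(uniqP 0) => i j; rewrite !inE size_C1 // => hi hj.
rewrite !nth_C1 //; exact: e1_inj.
Qed.
Lemma uniq_C2 : uniq (C2_idx k).
Proof.
apply/(uniqP 0) => i j; rewrite !inE size_C2 // => hi hj.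
rewrite !nth_C2 //; exact: e2_inj.
Qed.

Lemma e1_notin p : p < 2 * k -> e1 k p \notin C2_idx k.
Proof.
move=> hp; apply/negP => H; have := nth_index 0 H.
have hi : index (e1 k p) (C2_idx k) < 2 * k by rewrite -(size_C2 hk h4) index_mem.
rewrite nth_C2 //; move/esym; exact: e12.
Qed.
Lemma e2_notin p : p < 2 * k -> e2 k p \notin C1_idx k.
Proof.
move=> hp; apply/negP => H; have := nth_index 0 H.
have hi : index (e2 k p) (C1_idx k) < 2 * k by rewrite -(size_C1 hk h4) index_mem.
rewrite nth_C1 //; exact: e12.
Qed.

Lemma b_e1 p : p < 2 * k -> b_idx k (e1 k p) = e1 k (p.+1 %% (2 * k)).
Proof.
move=> hp; rewrite /b_idx (next_nth (C2_idx k)) (negbTE (e1_notin hp)).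
rewrite -nth_C1 // next_nth_uniq ?uniq_C1 ?size_C1 // nth_C1 // ltn_pmod //; lia.
Qed.
Lemma b_e2 p : p < 2 * k -> b_idx k (e2 k p) = e2 k (p.+1 %% (2 * k)).
Proof.
move=> hp; rewrite /b_idx -nth_C2 // next_nth_uniq ?uniq_C2 ?size_C2 // nth_C2 ?ltn_pmod //; last lia.
rewrite (next_nth (C1_idx k)) (negbTE (e2_notin _)) // ltn_pmod //; lia.
Qed.

Definition enc p (e : bool) := if e then e2 k p else e1 k p.

Lemma enc_inj p p' e e' : p < 2 * k -> p' < 2 * k -> enc p e = enc p' e' -> p = p' /\ e = e'.
Proof.
move=> hp hp'; case: e; case: e' => /= E.
- by split => //; apply: e2_inj E.
- by have := e12 hk h4 hp' hp; rewrite E.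
- by have := e12 hk h4 hp hp'; rewrite E.
- by split => //; apply: e1_inj E.
Qed.

Lemma e1_lt p : p < 2 * k -> e1 k p < 4 * k.
Proof. move=> hp; rewrite /e1; crunch. Qed.
Lemma e2_lt p : p < 2 * k -> e2 k p < 4 * k.
Proof. move=> hp; rewrite /e2; crunch. Qed.
Lemma enc_lt p e : p < 2 * k -> enc p e < 4 * k.
Proof. by case: e => hp /=; [apply: e2_lt | apply: e1_lt]. Qed.

Lemma b_enc p e : p < 2 * k -> b_idx k (enc p e) = enc (p.+1 %% (2 * k)) e.
Proof. by case: e => hp /=; [apply: b_e2 | apply: b_e1]. Qed.
Lemma a_enc p e : p < 2 * k -> a_idx (enc p e) = enc (twn k p) (~~ e).
Proof. by case: e => hp /=; [apply: a_e2 | apply: a_e1]. Qed.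
Lemma twn_lt p : p < 2 * k -> twn k p < 2 * k.
Proof. move=> hp; rewrite /twn; crunch. Qed.
Lemma a_idx_lt z : z < 4 * k -> a_idx z < 4 * k.
Proof. move=> hz; rewrite /a_idx; crunch. Qed.
End Idx.

Section Grp.
Local Open Scope ring_scope.
Variable k : nat.
Hypothesis hk : (k %% 2 = 0)%N.
Hypothesis h4 : (4 <= k)%N.
Local Notation N := (2 * k)%N.
Local Notation Z := 'Z_N.

Lemma N1 : (1 < N)%N. Proof. lia. Qed.
Lemma valZ (x : Z) : (nat_of_ord x < N)%N.
Proof. have := ltn_ord x; by rewrite [X in (_ < X)%N -> _]Zp_cast // N1. Qed.
Lemma valD (x y : Z) : val (x + y) = ((val x + val y) %% N)%N.
Proof. by rewrite /= [X in (_ %% X)%N = _]Zp_cast // N1. Qed.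
Lemma valN (x : Z) : val (- x) = ((N - val x) %% N)%N.
Proof. by rewrite /= [X in (X - _)%N]Zp_cast ?N1 // [X in (_ %% X)%N = _]Zp_cast // N1. Qed.
Lemma valn (n : nat) : val (n%:R : Z) = (n %% N)%N.
Proof. exact: (val_Zp_nat N1 n). Qed.
Lemma Nodd : odd N = false. Proof. by rewrite oddM. Qed.

Definition ox (x : Z) := odd (nat_of_ord x).
Lemma oxD x y : ox (x + y) = ox x (+) ox y.
Proof. by rewrite /ox valD odd_mod ?Nodd // oddD. Qed.
Lemma oxN x : ox (- x) = ox x.
Proof.
rewrite /ox valN odd_mod ?Nodd //.
by rewrite oddB ?Nodd //; apply: ltnW; apply: valZ.
Qed.
Lemma ox0 : ox 0 = false. Proof. by []. Qed.

Definition K : Z := k%:R.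
Lemma valK : val K = k.
Proof. by rewrite valn modn_small //; lia. Qed.
Lemma oxK : ox K = false.
Proof. rewrite /ox valK; have := modn2 k; rewrite hk; by case: (odd k). Qed.
Lemma KK : K + K = 0.
Proof. apply: val_inj; rewrite valD valK /=; by rewrite addnn -mul2n modnn. Qed.

Definition tw (x : Z) := x + (if ox x then K else 0).
Lemma oxtw x : ox (tw x) = ox x.
Proof. by rewrite /tw oxD; case: (ox x); rewrite ?oxK ?ox0 addbF. Qed.
Lemma twD x y : tw (x + y) = tw x + tw y.
Proof.
rewrite /tw oxD; case: (ox x); case: (ox y) => /=.
- by rewrite addr0 addrACA KK addr0.
- by rewrite addr0 addrAC.
- by rewrite addr0 addrA.
- by rewrite !addr0.
Qed.
Lemma twK x : tw (tw x) = x.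
Proof. by rewrite {1}/tw oxtw /tw; case: (ox x); rewrite ?addr0 // -addrA KK addr0. Qed.
Lemma twN x : tw (- x) = - tw x.
Proof. by apply/eqP; rewrite -addr_eq0 -twD addNr /tw ox0 addr0. Qed.

Definition act (e : bool) x := if e then tw x else x.
Lemma actD e x y : act e (x + y) = act e x + act e y.
Proof. by case: e => //=; rewrite twD. Qed.
Lemma actN e x : act e (- x) = - act e x.
Proof. by case: e => //=; rewrite twN. Qed.
Lemma actM e f x : act (e (+) f) x = act e (act f x).
Proof. by case: e; case: f => //=; rewrite twK. Qed.
Lemma actK e x : act e (act e x) = x.
Proof. by rewrite -actM addbb. Qed.

Definition G := (Z * bool)%type.
Definition mulG (A B : G) : G := (A.1 + act A.2 B.1, A.2 (+) B.2).
Definition invG (A : G) : G := (- act A.2 A.1, A.2).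
Definition oneG : G := (0, false).

Lemma mulGA A B C : mulG (mulG A B) C = mulG A (mulG B C).
Proof. by rewrite /mulG /= addbA actD actM addrA. Qed.
Lemma mul1G A : mulG oneG A = A.
Proof. by case: A => x e; rewrite /mulG /= add0r. Qed.
Lemma mulVG A : mulG (invG A) A = oneG.
Proof. by case: A => x e; rewrite /mulG /= addNr addbb. Qed.
Lemma mulGV A : mulG A (invG A) = oneG.
Proof. by case: A => x e; rewrite /mulG /= actN actK subrr addbb. Qed.
Lemma mulG1 A : mulG A oneG = A.
Proof. by case: A => x e; rewrite /mulG /= /act /tw ox0; case: e; rewrite !addr0 ?addbF. Qed.
Lemma mulGI A B C : mulG A B = mulG A C -> B = C.
Proof. by move=> E; rewrite -(mul1G B) -(mulVG A) mulGA E -mulGA mulVG mul1G. Qed.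
Lemma mulIG A B C : mulG B A = mulG C A -> B = C.
Proof. by move=> E; rewrite -(mulG1 B) -(mulGV A) -mulGA E mulGA mulGV mulG1. Qed.


Lemma Kc (e : bool) : (if e then K else 0) = ((e : nat) * k)%:R :> Z.
Proof. by case: e; rewrite ?mul1n ?mul0n. Qed.

Definition mu (A : G) : G := ((nat_of_ord A.1 %/ 2)%N%:R + (if A.2 then K else 0), A.2 (+) ox A.1).
Definition psi A := mulG (mu A) (invG A).

Lemma mu_inj : injective mu.
Proof.
move=> [x e] [y f] E.
have E1 : ((nat_of_ord x %/ 2)%N%:R + (if e then K else 0) : Z) = (nat_of_ord y %/ 2)%N%:R + (if f then K else 0) by exact: (congr1 fst E).
have E2 : e (+) ox x = f (+) ox y by exact: (congr1 snd E).
have hx := valZ x; have hy := valZ y.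
move: E1; rewrite !Kc -!natrD => /(congr1 val); rewrite !valn !modn_small; try lia.
move=> E1.
clear E; have ef : e = f by move: E1; case: (e); case: (f) => //=; lia.
subst f; move/addbI: E2; rewrite /ox => Eo.
congr pair; apply: val_inj => /=.
have := modn2 (nat_of_ord x); have := modn2 (nat_of_ord y); rewrite Eo; lia.
Qed.

Lemma psi_eq x e : psi (x, e) =
  ((nat_of_ord x %/ 2)%N%:R - x + (if (if ox x then ~~ e else e) then K else 0), ox x).
Proof.
rewrite /psi /mulG /invG /mu /=; congr pair; last by rewrite addbAC addbb.
case: e; case Eo: (ox x); rewrite /act /tw ?Eo /= ?addr0 ?oxN ?oxD ?oxK ?Eo /=; ring.
Qed.

Lemma Kc' (e : bool) : (if e then K else 0) = (if e then k else 0)%N%:R :> Z.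
Proof. by case: e. Qed.

Lemma psi_inj : injective psi.
Proof.
move=> [x e] [y f]; rewrite !psi_eq => E.
have E1 : ((nat_of_ord x %/ 2)%N%:R - x + (if (if ox x then ~~ e else e) then K else 0) : Z) = (nat_of_ord y %/ 2)%N%:R - y + (if (if ox y then ~~ f else f) then K else 0) by exact: (congr1 fst E).
have Eo : ox x = ox y by exact: (congr1 snd E).
clear E.
have hx := valZ x; have hy := valZ y.
have [B EB] : {B | B = (if ox x then ~~ e else e)} by eexists.
have [B' EB'] : {B | B = (if ox y then ~~ f else f)} by eexists.
move: E1; rewrite -EB -EB' !Kc' => E1.
have E2 : ((nat_of_ord x %/ 2 + nat_of_ord y + (if B then k else 0))%N%:R : Z) = (nat_of_ord y %/ 2 + nat_of_ord x + (if B' then k else 0))%N%:R.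
  apply/eqP; rewrite -subr_eq0; apply/eqP.
  transitivity (((nat_of_ord x %/ 2)%N%:R - x + (if B then k else 0)%N%:R) - ((nat_of_ord y %/ 2)%N%:R - y + (if B' then k else 0)%N%:R) : Z).
    rewrite !natrD !natr_Zp; ring.
  by rewrite E1 subrr.
move/(congr1 val): E2; rewrite !valn => E2.
move: Eo; rewrite /ox => Eo.
have Oa := modn2 (nat_of_ord x); have Ob := modn2 (nat_of_ord y).
move: E2 Oa Ob Eo EB EB' hx hy.
have xy : nat_of_ord x = nat_of_ord y -> x = y by move=> h; apply: val_inj.
move: xy; move: (nat_of_ord x) (nat_of_ord y) => a b xy.
move=> E2 Oa Ob Eo EB EB' ha hb.
rewrite -Eo in Ob.
have E3 : ((a %/ 2 + b %/ 2 + odd a) + (b %/ 2 + (if B then k else 0)) == (a %/ 2 + b %/ 2 + odd a) + (a %/ 2 + (if B' then k else 0)) %[mod N])%N.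
  apply/eqP; rewrite -(_ : (a %/ 2 + b + (if B then k else 0) = (a %/ 2 + b %/ 2 + odd a) + (b %/ 2 + (if B then k else 0)))%N); last first.
    by move: Oa Ob; case: (odd a); lia.
  rewrite -(_ : (b %/ 2 + a + (if B' then k else 0) = (a %/ 2 + b %/ 2 + odd a) + (a %/ 2 + (if B' then k else 0)))%N) //.
  by move: Oa Ob; case: (odd a); lia.
rewrite eqn_modDl !modn_small in E3; first last.
- by case: (B); case: (B'); lia.
- by case: (B); case: (B'); lia.
clear E1 E2; move/eqP: E3; move: EB EB'; case: B; case: B' => /= EB EB' E3.
- have ab : a = b by move: Oa Ob; case: (odd a); lia.
  subst b; have xy' := xy erefl; subst y; congr pair.
  by move: EB EB'; case: (ox x); case: e; case: f.
- lia.
- lia.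
- have ab : a = b by move: Oa Ob; case: (odd a); lia.
  subst b; have xy' := xy erefl; subst y; congr pair.
  by move: EB EB'; case: (ox x); case: e; case: f.
Qed.

Lemma val_tw x : nat_of_ord (tw x) = twn k x.
Proof.
rewrite /tw /twn /ox; have hx := valZ x.
case: (boolP (odd x)) => Ho.
  rewrite valD valK; change (val x) with (nat_of_ord x); case: ltnP => h.
    rewrite modn_small //; lia.
  rewrite (_ : (x + k = (x - k) + N)%N); last lia.
  rewrite modnDr modn_small //; lia.
by rewrite addr0.
Qed.

Lemma val1 : nat_of_ord (1 : Z) = 1%N.
Proof. by rewrite -(mulr1n 1) valn modn_small //; lia. Qed.

Lemma invK A : invG (invG A) = A.
Proof. by apply: (@mulIG (invG A)); rewrite mulVG mulGV. Qed.
Lemma mulGK W X : mulG (mulG W X) (invG X) = W.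
Proof. by rewrite mulGA mulGV mulG1. Qed.
Lemma mu_shift X Y : mulG (mu (mulG Y (invG X))) X = mulG (psi (mulG Y (invG X))) Y.
Proof.
rewrite /psi mulGA; congr mulG.
set W := mulG Y (invG X).
have -> : Y = mulG W X by rewrite /W mulGA mulVG mulG1.
by rewrite -mulGA mulVG mul1G.
Qed.

End Grp.

Section Transport.
Variable F : finFieldType.
Variable k : nat.
Variable cs : seq F.
Hypothesis hk : k %% 2 = 0.
Hypothesis h4 : 4 <= k.
Hypothesis hu : uniq cs.
Hypothesis hs : size cs = 4 * k.
Hypothesis hF : #|F| = 4 * k.

Definition Phi (P : ('Z_(2 * k) * bool)%type) : F := nth 0%R cs (enc k (nat_of_ord P.1) P.2).

Lemma nth_a z : z < 4 * k -> a_perm cs (nth 0%R cs z) = nth 0%R cs (a_idx z).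
Proof.
move=> hz; rewrite /a_perm ffunE index_uniq ?hs //.
by apply: set_nth_default; rewrite hs; apply: a_idx_lt.
Qed.

Lemma nth_b p e : p < 2 * k ->
  b_perm k cs (nth 0%R cs (enc k p e)) = nth 0%R cs (enc k (p.+1 %% (2 * k)) e).
Proof.
move=> hp; rewrite /b_perm ffunE index_uniq ?hs ?enc_lt // b_enc //.
by apply: set_nth_default; rewrite hs; apply: enc_lt => //; rewrite ltn_pmod //; lia.
Qed.

Lemma Phi_a x e : a_perm cs (Phi (x, e)) = Phi (tw x, ~~ e).
Proof.
have hx : nat_of_ord x < 2 * k by apply: valZ.
have E : nat_of_ord (tw x) = twn k x by apply: val_tw.
by rewrite /Phi /= nth_a ?enc_lt // a_enc // -E.
Qed.

Lemma Phi_b x e : b_perm k cs (Phi (x, e)) = Phi ((1%:R + x)%R, e).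
Proof.
have hx : nat_of_ord x < 2 * k by apply: valZ.
have E : val ((1%:R + x)%R : 'Z_(2*k)) = x.+1 %% (2 * k).
  have h1 : 1 %% (2 * k) = 1 by rewrite modn_small //; lia.
  by rewrite valD // valn // h1.
by rewrite /Phi /= nth_b // -E.
Qed.

Lemma Phi_iter j x e : iter j (b_perm k cs) (Phi (x, e)) = Phi ((j%:R + x)%R, e).
Proof.
elim: j => [|j IH]; first by rewrite /= add0r.
by rewrite iterS IH Phi_b mulr1n mulrS addrA.
Qed.

Lemma Phi_inj : injective Phi.
Proof.
move=> [x e] [y f]; rewrite /Phi /= => E.
have hx : nat_of_ord x < 2 * k by apply: valZ.
have hy : nat_of_ord y < 2 * k by apply: valZ.
move/eqP: E; rewrite nth_uniq ?hs ?enc_lt // => /eqP /enc_inj [] // => E1 ->.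
by congr pair; apply: val_inj.
Qed.

Lemma Phi_bij : bijective Phi.
Proof.
apply: (@inj_card_bij _ F Phi Phi_inj).
rewrite hF card_prod card_bool card_ord Zp_cast; lia.
Qed.

Lemma G1_act (h : {ffun F -> F}) : h \in G1 k cs ->
  exists W : G k, forall P, h (Phi P) = Phi (mulG W P).
Proof.
case/imsetP => -[j e] _ ->.
case: e => [[|[|m]] he] //.
- exists (((nat_of_ord j)%:R)%R, false) => -[x f]; rewrite ffunE /= Phi_iter.
  by rewrite /mulG /=.
- exists (((nat_of_ord j)%:R)%R, true) => -[x f]; rewrite ffunE /= Phi_a Phi_iter.
  by rewrite /mulG /=.
Qed.

End Transport.

Theorem theorem4p8 (l : nat) (hl : 2 <= l) (F : finFieldType)
  (hF : #|F| = 4 * 2 ^ l)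
  (cs : seq F) (hcs_uniq : uniq cs) (hcs_size : size cs = 4 * 2 ^ l)
  (f : F -> F -> F) (hf : LPP f)
  (beta : 'I_(4 * 2 ^ l) -> {ffun F -> F})
  (hbeta_inj : injective beta)
  (hbeta_G1 : [set beta i | i : 'I_(4 * 2 ^ l)] = G1 (2 ^ l) cs)
  (hfbeta : forall (i : 'I_(4 * 2 ^ l)) (x : F), f x (beta i x) = nth x cs i) :
  exists g : F -> F -> F, LPP g /\ orthogonal_LPP f g.
Proof.
have h4 : 4 <= 2 ^ l by rewrite (_ : 4 = 2 ^ 2) // leq_pexp2l.
have hk : 2 ^ l %% 2 = 0 by case: l hl {hF hcs_size beta hbeta_inj hbeta_G1 hfbeta h4} => [|l'] // _; rewrite expnS modnMr.
move: beta hbeta_inj hbeta_G1 hfbeta hF hcs_size h4 hk.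
move: (2 ^ l) => k beta hbeta_inj hbeta_G1 hfbeta hF hcs_size h4 hk.
have [crd PhiK crdK] : bijective (@Phi F k cs) by apply: Phi_bij.
pose g := fun x y => @Phi F k cs (mulG (mu (mulG (crd y) (invG (crd x)))) (crd x)).
exists g.
have hbeta i : exists W : G k, forall P, beta i (@Phi F k cs P) = @Phi F k cs (mulG W P).
  apply: G1_act => //; rewrite -hbeta_G1; exact: imset_f.
have hmem u : u \in cs.
  have := cardC (mem cs); rewrite (card_uniqP hcs_uniq) hcs_size hF => /eqP.
  rewrite -{2}(addn0 (4 * k)) eqn_add2l => /eqP /card0_eq /(_ u).
  by rewrite !inE; case: (u \in cs).
case: hf => hfr hfc.
have PhiI := can_inj PhiK; have crdI := can_inj crdK.
split.
  split.
    move=> y; apply: injF_bij => x1 x2; rewrite /g => /PhiI.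
    rewrite !(mu_shift hk h4) => /(mulIG hk h4) /(psi_inj hk h4) /(mulGI hk h4).
    by move/(congr1 (@invG k)); rewrite !(invK hk h4) => /crdI.
  move=> x; apply: injF_bij => y1 y2; rewrite /g => /PhiI.
  by move/(mulIG hk h4) /(mu_inj hk h4) /(mulIG hk h4) /crdI.
move=> u v.
have hi0 : index u cs < 4 * k by rewrite -hcs_size index_mem.
have [W hW] := hbeta (Ordinal hi0).
set b := beta (Ordinal hi0) in hW *.
have hfb x : f x (b x) = u by rewrite /b hfbeta /= nth_index.
have hgb x : g x (b x) = @Phi F k cs (mulG (mu W) (crd x)).
  by rewrite /g -{1}(crdK x) hW PhiK (mulGK hk h4).
set X0 := mulG (invG (mu W)) (crd v).
exists (@Phi F k cs X0, b (@Phi F k cs X0)); split.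
  split => /=; first exact: hfb.
  by rewrite hgb PhiK /X0 -(mulGA hk h4) (mulGV hk h4) mul1G crdK.
move=> [x y] /= [hx hy].
have ey : y = b x by apply: (bij_inj (hfc x)); rewrite hx hfb.
subst y.
have ex : crd x = X0.
  apply: (mulGI hk h4 (A := mu W)); rewrite /X0 -(mulGA hk h4) (mulGV hk h4) mul1G.
  by rewrite -hy hgb PhiK.
by rewrite -ex crdK.
Qed.
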